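(* Let $\mathcal{G}\subseteq C(\mathbb{R},\mathbb{R})$ be nonempty. The following conditions are equivalent: (1) $\mathcal{K}_\mathcal{G}=\{\mathrm{CL}(\mathbb{R})\cap\mathcal{P}(X):X\subseteq\mathbb{R}\}$; (2) $\mathcal{G}$ is a complete and connected family, and for every $x\in\mathbb{R}$ there exists $f\in C(\mathbb{R},\mathbb{R})$ such that $f\setminus\bigcup\mathcal{G}=f\restriction\{x\}$ (i.e., $(x,f(x))$ is the only point of the graph of $f$ not in $\bigcup\mathcal{G}$).
   Context: Functions are identified with their graphs, so $\bigcup\mathcal{G}\subseteq\mathbb{R}^2$ is the union of graphs. $\mathrm{CL}(\mathbb{R})$ is the family of closed subsets of $\mathbb{R}$ and $\mathcal{P}(X)$ the power set of $X$. A family $\mathcal{G}\subseteq C(\mathbb{R},\mathbb{R})$ is complete if $g\in\mathcal{G}$ for every $g\in C(\mathbb{R},\mathbb{R})$ whose graph is contained in $\bigcup\mathcal{G}$; it is connected if for any $f,g\in\mathcal{G}$ and $x\neq y$ there is $h\in\mathcal{G}$ with $h(x)=f(x)$ and $h(y)=g(y)$. For $\mathcal{G}\subseteq C(\mathbb{R},\mathbb{R})$ let $R_\mathcal{G}=\{(f,E)\in C(\mathbb{R},\mathbb{R})\times\mathrm{CL}(\mathbb{R}):(\exists g\in\mathcal{G})\, f\restriction E=g\restriction E\}$; for $\mathcal{F}\subseteq C(\mathbb{R},\mathbb{R})$ put $E_\mathcal{G}(\mathcal{F})=\{E\in\mathrm{CL}(\mathbb{R}):(\forall f\in\mathcal{F})\,(f,E)\in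 R_\mathcal{G}\}$, and let $\mathcal{K}_\mathcal{G}=\{E_\mathcal{G}(\mathcal{F}):\mathcal{F}\subseteq C(\mathbb{R},\mathbb{R})\}$. *)

(* Defs.v *)
From Stdlib Require Import Reals Rtopology.
Open Scope R_scope.

Definition fam := (R -> R) -> Prop.

Definition cont_fam (G : fam) : Prop := forall g, G g -> continuity g.

Definition union_graphs (G : fam) (p : R * R) : Prop :=
  exists g, G g /\ snd p = g (fst p).

Definition complete (G : fam) : Prop :=
  forall g : R -> R, continuity g ->
    (forall x, union_graphs G (x, g x)) -> G g.

Definition connected (G : fam) : Prop :=
  forall f g, G f -> G g -> forall x y : R, x <> y ->
    exists h, G h /\ h x = f x /\ h y = g y.

Definition CL (E : R -> Prop) : Prop := closed_set E.

Definition R_G (G : fam) (f : R -> R) (E : R -> Prop) : Prop :=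
  continuity f /\ CL E /\
  exists g, G g /\ forall x, E x -> f x = g x.

Definition E_G (G : fam) (F : fam) (E : R -> Prop) : Prop :=
  CL E /\ forall f, F f -> R_G G f E.

Definition seteq (S T : (R -> Prop) -> Prop) : Prop := forall E, S E <-> T E.

Definition K_G (G : fam) (S : (R -> Prop) -> Prop) : Prop :=
  exists F : fam, cont_fam F /\ seteq S (E_G G F).

Definition CL_sub (X : R -> Prop) (E : R -> Prop) : Prop :=
  CL E /\ forall x, E x -> X x.

(* Main.v *)
Require Import Defs.
From Stdlib Require Import Reals Rtopology Lra ClassicalEpsilon Classical FunctionalExtensionality.
Open Scope R_scope.

Lemma Rabs_le_iff x e : Rabs x <= e <-> -e <= x <= e.
Proof. unfold Rabs; destruct (Rcase_abs x); split; intros; lra. Qed.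
Lemma Rabs_lt_iff x e : Rabs x < e <-> -e < x < e.
Proof. unfold Rabs; destruct (Rcase_abs x); split; intros; lra. Qed.

Lemma cpt_intro (f : R -> R) x :
  (forall eps, 0 < eps -> exists del, 0 < del /\
     forall y, Rabs (y - x) < del -> Rabs (f y - f x) < eps) -> continuity_pt f x.
Proof.
  intros H eps He. destruct (H eps He) as [del [Hd Hy]].
  exists del; split; [lra|]. intros y [_ Hy2]. simpl in *. unfold R_dist in *. auto.
Qed.

Lemma cpt_elim (f : R -> R) x : continuity_pt f x ->
  forall eps, 0 < eps -> exists del, 0 < del /\
     forall y, Rabs (y - x) < del -> Rabs (f y - f x) < eps.
Proof.
  intros H eps He. destruct (H eps He) as [del [Hd Hy]].
  exists del; split; [lra|]. intros y Hyx.
  destruct (Req_dec y x) as [->|Hne].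
  - rewrite Rminus_diag, Rabs_R0; lra.
  - apply (Hy y). split; [split; [exact I| auto]|]. simpl; unfold R_dist; auto.
Qed.

Lemma paste_cont (h1 h2 : R -> R) x : continuity h1 -> continuity h2 -> h1 x = h2 x ->
  continuity (fun t => if Rle_dec t x then h1 t else h2 t).
Proof.
  intros C1 C2 Hx t0. apply cpt_intro. intros eps He.
  destruct (cpt_elim h1 t0 (C1 t0) eps He) as [d1 [Hd1 H1]].
  destruct (cpt_elim h2 t0 (C2 t0) eps He) as [d2 [Hd2 H2]].
  destruct (Rtotal_order t0 x) as [Hlt|[Heq|Hgt]].
  - exists (Rmin d1 (x - t0)). split. apply Rmin_pos; lra.
    intros y Hy. pose proof (Rmin_l d1 (x - t0)). pose proof (Rmin_r d1 (x - t0)).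
    apply Rabs_lt_iff in Hy.
    destruct (Rle_dec y x); [|lra]. destruct (Rle_dec t0 x); [|lra].
    apply H1. apply Rabs_lt_iff; lra.
  - subst t0. exists (Rmin d1 d2). split. apply Rmin_pos; lra.
    intros y Hy. pose proof (Rmin_l d1 d2). pose proof (Rmin_r d1 d2).
    apply Rabs_lt_iff in Hy.
    destruct (Rle_dec x x); [|lra].
    destruct (Rle_dec y x).
    + apply H1. apply Rabs_lt_iff; lra.
    + rewrite Hx. apply H2. apply Rabs_lt_iff; lra.
  - exists (Rmin d2 (t0 - x)). split. apply Rmin_pos; lra.
    intros y Hy. pose proof (Rmin_l d2 (t0 - x)). pose proof (Rmin_r d2 (t0 - x)).
    apply Rabs_lt_iff in Hy.
    destruct (Rle_dec y x); [lra|]. destruct (Rle_dec t0 x); [lra|].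
    apply H2. apply Rabs_lt_iff; lra.
Qed.

Lemma cont_max (h1 h2 : R -> R) : continuity h1 -> continuity h2 ->
  continuity (fun t => Rmax (h1 t) (h2 t)).
Proof.
  intros C1 C2 t0. apply cpt_intro. intros eps He.
  destruct (cpt_elim h1 t0 (C1 t0) eps He) as [d1 [Hd1 H1]].
  destruct (cpt_elim h2 t0 (C2 t0) eps He) as [d2 [Hd2 H2]].
  exists (Rmin d1 d2). split. apply Rmin_pos; lra.
  intros y Hy. pose proof (Rmin_l d1 d2). pose proof (Rmin_r d1 d2).
  assert (A1 := H1 y ltac:(lra)). assert (A2 := H2 y ltac:(lra)).
  apply Rabs_lt_iff in A1, A2. apply Rabs_lt_iff.
  unfold Rmax; destruct (Rle_dec (h1 y) (h2 y)); destruct (Rle_dec (h1 t0) (h2 t0)); lra.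
Qed.

Lemma cont_min (h1 h2 : R -> R) : continuity h1 -> continuity h2 ->
  continuity (fun t => Rmin (h1 t) (h2 t)).
Proof.
  intros C1 C2 t0. apply cpt_intro. intros eps He.
  destruct (cpt_elim h1 t0 (C1 t0) eps He) as [d1 [Hd1 H1]].
  destruct (cpt_elim h2 t0 (C2 t0) eps He) as [d2 [Hd2 H2]].
  exists (Rmin d1 d2). split. apply Rmin_pos; lra.
  intros y Hy. pose proof (Rmin_l d1 d2). pose proof (Rmin_r d1 d2).
  assert (A1 := H1 y ltac:(lra)). assert (A2 := H2 y ltac:(lra)).
  apply Rabs_lt_iff in A1, A2. apply Rabs_lt_iff.
  unfold Rmin; destruct (Rle_dec (h1 y) (h2 y)); destruct (Rle_dec (h1 t0) (h2 t0)); lra.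
Qed.

Lemma cont_local (g P : R -> R) z del : 0 < del ->
  (forall y, Rabs (y - z) < del -> g y = P y) -> continuity_pt P z -> continuity_pt g z.
Proof.
  intros Hd Heq C. apply cpt_intro. intros eps He.
  destruct (cpt_elim P z C eps He) as [d1 [Hd1 H1]].
  exists (Rmin d1 del). split. apply Rmin_pos; lra.
  intros y Hy. pose proof (Rmin_l d1 del). pose proof (Rmin_r d1 del).
  rewrite (Heq y) by lra. rewrite (Heq z) by (rewrite Rminus_diag, Rabs_R0; lra).
  apply H1; lra.
Qed.

Lemma to_G (G : fam) h : complete G -> continuity h ->
  (forall t, exists g, G g /\ h t = g t) -> G h.
Proof.
  intros Hc Ch H. apply Hc; [exact Ch|]. intros x. destruct (H x) as [g [Gg E]].
  exists g; simpl; auto.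
Qed.

Lemma trans (G : fam) (P u : R -> R) x y : cont_fam G -> complete G -> connected G ->
  G P -> G u -> x < y ->
  exists psi, G psi /\ (forall t, t <= x -> psi t = P t) /\ (forall t, y <= t -> psi t = u t)
   /\ (forall t, Rmin (P t) (u t) <= psi t <= Rmax (P t) (u t)).
Proof.
  intros Hcf Hc Hcn GP Gu Hxy.
  destruct (Hcn P u GP Gu x y ltac:(lra)) as [k [Gk [Hkx Hky]]].
  set (cl := fun t => Rmax (Rmin (k t) (Rmax (P t) (u t))) (Rmin (P t) (u t))).
  assert (Hcl : forall t, Rmin (P t) (u t) <= k t <= Rmax (P t) (u t) -> cl t = k t).
  { intros t Ht. unfold cl. unfold Rmax, Rmin in *.
    repeat destruct Rle_dec; lra. }
  assert (Hclb : forall t, Rmin (P t) (u t) <= cl t <= Rmax (P t) (u t)).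
  { intros t. unfold cl. unfold Rmax, Rmin in *. repeat destruct Rle_dec; lra. }
  assert (Ccl : continuity cl).
  { unfold cl. apply cont_max. apply cont_min. apply Hcf; auto.
    apply cont_max; apply Hcf; auto. apply cont_min; apply Hcf; auto. }
  set (q := fun t => if Rle_dec t y then cl t else u t).
  set (psi := fun t => if Rle_dec t x then P t else q t).
  assert (Cq : continuity q).
  { apply paste_cont; [exact Ccl | apply Hcf; exact Gu |]. rewrite Hcl; auto.
    rewrite Hky. unfold Rmax, Rmin; repeat destruct Rle_dec; lra. }
  assert (Cpsi : continuity psi).
  { apply paste_cont; [apply Hcf; exact GP | exact Cq |]. unfold q.
    destruct (Rle_dec x y); [|lra]. rewrite Hcl; auto.
    rewrite Hkx. unfold Rmax, Rmin; repeat destruct Rle_dec; lra. }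
  exists psi. split; [|split; [|split]].
  - apply to_G; auto. intros t. unfold psi, q, cl.
    destruct (Rle_dec t x). exists P; auto.
    destruct (Rle_dec t y); [|exists u; auto].
    unfold Rmax, Rmin; repeat destruct Rle_dec; first [exists P; split; auto; fail | exists u; split; auto; fail | exists k; split; auto].
  - intros t Ht. unfold psi. destruct (Rle_dec t x); [auto|lra].
  - intros t Ht. unfold psi, q. destruct (Rle_dec t x); [lra|].
    destruct (Rle_dec t y); [|auto]. assert (t = y) by lra. subst t.
    rewrite Hcl; auto. rewrite Hky. unfold Rmax, Rmin; repeat destruct Rle_dec; lra.
  - intros t. unfold psi, q. destruct (Rle_dec t x).
    unfold Rmax, Rmin; repeat destruct Rle_dec; lra.
    destruct (Rle_dec t y). apply Hclb.
    unfold Rmax, Rmin; repeat destruct Rle_dec; lra.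
Qed.

Definition LeftEnd (E : R -> Prop) z a := E a /\ a < z /\ forall e, E e -> a < e -> z < e.
Definition RightEnd (E : R -> Prop) z b := E b /\ z < b /\ forall e, E e -> e < b -> e < z.

Lemma closed_lim (E : R -> Prop) a : closed_set E ->
  (forall del, 0 < del -> exists e, E e /\ Rabs (e - a) < del) -> E a.
Proof.
  intros HE H. apply NNPP. intros Hna.
  destruct (HE a Hna) as [del Hdel].
  destruct (H del (cond_pos del)) as [e [Ee He]].
  apply (Hdel e); auto.
Qed.

Lemma left_end_ex E z : closed_set E -> ~ E z -> (exists e, E e /\ e < z) ->
  exists a, LeftEnd E z a.
Proof.
  intros HE Hz [e0 [Ee0 He0]].
  set (A := fun e => E e /\ e < z).
  assert (Hb : bound A). { exists z. intros x [_ Hx]; lra. }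
  destruct (completeness A Hb (ex_intro _ e0 (conj Ee0 He0))) as [a [Hub Hmin]].
  assert (Ha : E a).
  { apply closed_lim; auto. intros del Hdel.
    apply NNPP; intros Hn.
    assert (is_upper_bound A (a - del)).
    { intros x [Ex Hx]. apply Rnot_lt_le. intros Hlt.
      apply Hn. exists x. split; auto. assert (x <= a) by (apply Hub; split; auto).
      apply Rabs_lt_iff; lra. }
    specialize (Hmin _ H). lra. }
  assert (a <= z) by (apply Hmin; intros x [_ Hx]; lra).
  exists a. split; auto. split.
  - destruct (Req_dec a z); [subst; contradiction|lra].
  - intros e Ee Hae. apply Rnot_le_lt. intros Hez.
    destruct (Req_dec e z); [subst; contradiction|].
    assert (e <= a) by (apply Hub; split; auto; lra). lra.
Qed.

Lemma right_end_ex E z : closed_set E -> ~ E z -> (exists e, E e /\ z < e) ->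
  exists b, RightEnd E z b.
Proof.
  intros HE Hz [e0 [Ee0 He0]].
  set (A := fun e => E (- e) /\ z < - e).
  assert (Hb : bound A). { exists (- z). intros x [_ Hx]; lra. }
  assert (HA0 : exists x, A x). { exists (- e0). unfold A. rewrite Ropp_involutive. split; auto. }
  destruct (completeness A Hb HA0) as [m [Hub Hmin]].
  assert (Ha : E (- m)).
  { apply closed_lim; auto. intros del Hdel.
    apply NNPP; intros Hn.
    assert (is_upper_bound A (m - del)).
    { intros x [Ex Hx]. apply Rnot_lt_le. intros Hlt.
      apply Hn. exists (- x). split; auto. assert (x <= m) by (apply Hub; split; auto).
      apply Rabs_lt_iff; lra. }
    specialize (Hmin _ H). lra. }
  assert (m <= - z) by (apply Hmin; intros x [_ Hx]; lra).
  exists (- m). split; auto. split.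
  - destruct (Req_dec (- m) z) as [Heq|]; [rewrite Heq in Ha; contradiction|lra].
  - intros e Ee Hae. apply Rnot_le_lt. intros Hez.
    destruct (Req_dec e z); [subst; contradiction|].
    assert (- e <= m) by (apply Hub; split; [rewrite Ropp_involutive; auto|lra]). lra.
Qed.

Lemma left_end_uniq E z a a' : LeftEnd E z a -> LeftEnd E z a' -> a = a'.
Proof.
  intros [Ea [Ha H]] [Ea' [Ha' H']].
  destruct (Rtotal_order a a') as [Hlt|[Heq|Hgt]]; auto.
  - specialize (H a' Ea' Hlt). lra.
  - specialize (H' a Ea Hgt). lra.
Qed.

Lemma right_end_uniq E z b b' : RightEnd E z b -> RightEnd E z b' -> b = b'.
Proof.
  intros [Eb [Hb H]] [Eb' [Hb' H']].
  destruct (Rtotal_order b b') as [Hlt|[Heq|Hgt]]; auto.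
  - specialize (H' b Eb Hlt). lra.
  - specialize (H b' Eb' Hgt). lra.
Qed.

Definition aL E z := epsilon (inhabits 0) (LeftEnd E z).
Definition bR E z := epsilon (inhabits 0) (RightEnd E z).

Lemma aL_eq E z a : LeftEnd E z a -> aL E z = a.
Proof. intros H. apply (left_end_uniq E z). unfold aL; apply epsilon_spec. eauto. auto. Qed.
Lemma bR_eq E z b : RightEnd E z b -> bR E z = b.
Proof. intros H. apply (right_end_uniq E z). unfold bR; apply epsilon_spec. eauto. auto. Qed.

Definition Cand (G : fam) (f : R -> R) a b w := G w /\ w a = f a /\ w b = f b.
Definition good (f : R -> R) a b q (w : R -> R) := forall t, a <= t <= b -> Rabs (w t - f a) <= q.
Definition Sq G f a b q := exists w, Cand G f a b w /\ good f a b q w.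
Definition Wspec G f a b w := Cand G f a b w /\ forall q, Sq G f a b q -> good f a b (q + (b - a)) w.
Definition W G f a b := epsilon (inhabits (fun _ : R => 0)) (Wspec G f a b).
Definition pick (G : fam) (f : R -> R) (y : R) : R -> R :=
  epsilon (inhabits (fun _ : R => 0)) (fun h => G h /\ h y = f y).
Definition g0 (G : fam) : R -> R := epsilon (inhabits (fun _ : R => 0)) G.

Lemma pick_spec G f y : union_graphs G (y, f y) -> G (pick G f y) /\ pick G f y y = f y.
Proof. intros [h [Gh Hh]]. unfold pick; apply epsilon_spec. exists h. simpl in Hh; auto. Qed.

Lemma W_spec G f a b : a < b -> (exists w, Cand G f a b w) -> Wspec G f a b (W G f a b).
Proof.
  intros Hab [w0 Hw0]. unfold W; apply epsilon_spec.
  destruct (classic (exists q, Sq G f a b q)) as [[q0 Hq0]|Hn].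
  - set (A := fun x => Sq G f a b (- x)).
    assert (Hq : forall q, Sq G f a b q -> 0 <= q).
    { intros q [w [[_ [Hwa _]] Hg]]. specialize (Hg a ltac:(lra)).
      rewrite Hwa, Rminus_diag, Rabs_R0 in Hg; auto. }
    assert (Hb : bound A). { exists 0. intros x Hx. apply Hq in Hx; lra. }
    assert (HA0 : exists x, A x). { exists (- q0). unfold A. rewrite Ropp_involutive. auto. }
    destruct (completeness A Hb HA0) as [M [Hub Hmin]].
    assert (exists x, A x /\ M - (b - a) < x).
    { apply NNPP; intros Hn. assert (is_upper_bound A (M - (b - a))).
      { intros x Ax. apply Rnot_lt_le. intros Hl. apply Hn; eauto. }
      specialize (Hmin _ H). lra. }
    destruct H as [x [[w [Cw Gw]] Hx]].
    exists w. split; auto. intros q Sq' t Ht.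
    assert (- q <= M) by (apply Hub; unfold A; rewrite Ropp_involutive; auto).
    specialize (Gw t Ht). lra.
  - exists w0. split; auto. intros q Sq'. exfalso; eauto.
Qed.

Definition Hyp (G : fam) (f : R -> R) (E : R -> Prop) :=
  cont_fam G /\ complete G /\ connected G /\ (exists g, G g) /\ continuity f /\
  closed_set E /\ (forall y, E y -> union_graphs G (y, f y)).

Definition gfun G f E z : R :=
  if excluded_middle_informative (E z) then f z else
  if excluded_middle_informative (exists a, LeftEnd E z a) then
    (if excluded_middle_informative (exists b, RightEnd E z b)
     then W G f (aL E z) (bR E z) z else pick G f (aL E z) z)
  else (if excluded_middle_informative (exists b, RightEnd E z b)
     then pick G f (bR E z) z else g0 G z).

Lemma gfun_E G f E y : E y -> gfun G f E y = f y.
Proof. intros H. unfold gfun. destruct excluded_middle_informative; tauto. Qed.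

Lemma gfun_LR G f E y a b : ~ E y -> LeftEnd E y a -> RightEnd E y b -> gfun G f E y = W G f a b y.
Proof.
  intros Hy Ha Hb. unfold gfun.
  destruct excluded_middle_informative; [tauto|].
  destruct excluded_middle_informative as [_|nn]; [|exfalso; eauto].
  destruct excluded_middle_informative as [_|nn]; [|exfalso; eauto].
  rewrite (aL_eq _ _ _ Ha), (bR_eq _ _ _ Hb). auto.
Qed.

Lemma gfun_L G f E y a : ~ E y -> LeftEnd E y a -> ~ (exists b, RightEnd E y b) -> gfun G f E y = pick G f a y.
Proof.
  intros Hy Ha Hb. unfold gfun.
  destruct excluded_middle_informative; [tauto|].
  destruct excluded_middle_informative as [_|nn]; [|exfalso; eauto].
  destruct excluded_middle_informative as [nn|_]; [tauto|].
  rewrite (aL_eq _ _ _ Ha). auto.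
Qed.

Lemma gfun_R G f E y b : ~ E y -> ~ (exists a, LeftEnd E y a) -> RightEnd E y b -> gfun G f E y = pick G f b y.
Proof.
  intros Hy Ha Hb. unfold gfun.
  destruct excluded_middle_informative; [tauto|].
  destruct excluded_middle_informative as [nn|_]; [tauto|].
  destruct excluded_middle_informative as [_|nn]; [|exfalso; eauto].
  rewrite (bR_eq _ _ _ Hb). auto.
Qed.

Lemma gfun_N G f E y : ~ E y -> ~ (exists a, LeftEnd E y a) -> ~ (exists b, RightEnd E y b) -> gfun G f E y = g0 G y.
Proof.
  intros Hy Ha Hb. unfold gfun.
  destruct excluded_middle_informative; [tauto|].
  destruct excluded_middle_informative as [nn|_]; [tauto|].
  destruct excluded_middle_informative as [nn|_]; [tauto|]. auto.
Qed.

Lemma no_right E y : closed_set E -> ~ E y -> ~ (exists b, RightEnd E y b) -> forall e, E e -> e < y.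
Proof.
  intros HE Hy Hn e Ee. apply Rnot_le_lt. intros Hle.
  destruct (Req_dec e y); [subst; contradiction|].
  apply Hn. apply right_end_ex; auto. exists e; split; auto; lra.
Qed.

Lemma no_left E y : closed_set E -> ~ E y -> ~ (exists a, LeftEnd E y a) -> forall e, E e -> y < e.
Proof.
  intros HE Hy Hn e Ee. apply Rnot_le_lt. intros Hle.
  destruct (Req_dec e y); [subst; contradiction|].
  apply Hn. apply left_end_ex; auto. exists e; split; auto; lra.
Qed.

Lemma pickE G f E y : Hyp G f E -> E y -> G (pick G f y) /\ pick G f y y = f y.
Proof. intros (_&_&_&_&_&_&HU) Ey. apply pick_spec; auto. Qed.

Lemma pick_cont G f E y : Hyp G f E -> E y -> continuity (pick G f y).
Proof. intros H Ey. destruct (pickE G f E y H Ey). destruct H as [Hcf _]. apply Hcf; auto. Qed.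

Lemma W_ok G f E a b : Hyp G f E -> E a -> E b -> a < b -> Wspec G f a b (W G f a b).
Proof.
  intros H Ea Eb Hab. apply W_spec; auto.
  destruct (pickE G f E a H Ea) as [Ga Ha]. destruct (pickE G f E b H Eb) as [Gb Hb].
  destruct H as (_&_&Hcn&_).
  destruct (Hcn _ _ Ga Gb a b ltac:(lra)) as [k [Gk [Hka Hkb]]].
  exists k. split; auto. split; congruence.
Qed.

Lemma W_cont G f E a b : Hyp G f E -> E a -> E b -> a < b -> continuity (W G f a b).
Proof.
  intros H Ea Eb Hab. destruct (W_ok G f E a b H Ea Eb Hab) as [[GW _] _].
  destruct H as [Hcf _]. apply Hcf; auto.
Qed.

Lemma between_bound p q v r e : Rmin p q <= v <= Rmax p q -> Rabs (p - r) <= e ->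
  Rabs (q - r) <= e -> Rabs (v - r) <= e.
Proof.
  intros Hv Hp Hq. apply Rabs_le_iff in Hp, Hq. apply Rabs_le_iff.
  unfold Rmin, Rmax in Hv. destruct (Rle_dec p q); lra.
Qed.

Lemma BL G f E z : Hyp G f E -> E z -> forall eps, 0 < eps -> exists eta, 0 < eta /\
  forall a b t, E a -> E b -> a < b -> z - eta < a -> b < z + eta -> a <= t <= b ->
  Rabs (W G f a b t - f z) <= eps.
Proof.
  intros H Ez eps Heps.
  pose proof H as (Hcf&Hc&Hcn&_&Cf&HE&HU).
  set (e' := eps / 6).
  assert (He' : 0 < e') by (unfold e'; lra).
  destruct (cpt_elim f z (Cf z) e' He') as [h1 [Hh1 Hf1]].
  destruct (pickE G f E z H Ez) as [Gz Pz].
  destruct (cpt_elim _ z (pick_cont G f E z H Ez z) e' He') as [h2 [Hh2 Hf2]].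
  rewrite Pz in Hf2.
  set (eta := Rmin (Rmin h1 h2) e').
  assert (Heta1 : eta <= h1) by (unfold eta; pose proof (Rmin_l (Rmin h1 h2) e'); pose proof (Rmin_l h1 h2); lra).
  assert (Heta2 : eta <= h2) by (unfold eta; pose proof (Rmin_l (Rmin h1 h2) e'); pose proof (Rmin_r h1 h2); lra).
  assert (Heta3 : eta <= e') by (unfold eta; apply Rmin_r).
  assert (Heta : 0 < eta) by (unfold eta; repeat apply Rmin_pos; lra).
  exists eta. split; auto.
  intros a b t Ea Eb Hab Ha Hb Ht.
  destruct (pickE G f E a H Ea) as [Ga Pa]. destruct (pickE G f E b H Eb) as [Gb Pb].
  destruct (cpt_elim _ a (pick_cont G f E a H Ea a) e' He') as [da [Hda Hfa]].
  destruct (cpt_elim _ b (pick_cont G f E b H Eb b) e' He') as [db [Hdb Hfb]].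
  rewrite Pa in Hfa. rewrite Pb in Hfb.
  set (del := Rmin (Rmin da db) ((b - a) / 2) / 2).
  assert (Hd1 : del < da) by (unfold del; pose proof (Rmin_l (Rmin da db) ((b - a) / 2)); pose proof (Rmin_l da db); pose proof (Rmin_pos (Rmin da db) ((b-a)/2) ltac:(apply Rmin_pos; lra) ltac:(lra)); lra).
  assert (Hd2 : del < db) by (unfold del; pose proof (Rmin_l (Rmin da db) ((b - a) / 2)); pose proof (Rmin_r da db); pose proof (Rmin_pos (Rmin da db) ((b-a)/2) ltac:(apply Rmin_pos; lra) ltac:(lra)); lra).
  assert (Hd3 : del <= (b - a) / 4) by (unfold del; pose proof (Rmin_r (Rmin da db) ((b - a) / 2)); lra).
  assert (Hd0 : 0 < del) by (unfold del; pose proof (Rmin_pos (Rmin da db) ((b-a)/2) ltac:(apply Rmin_pos; lra) ltac:(lra)); lra).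
  destruct (trans G (pick G f a) (pick G f z) a (a + del) Hcf Hc Hcn Ga Gz ltac:(lra))
    as [c1 [Gc1 [Hc1l [Hc1r Hc1b]]]].
  destruct (trans G c1 (pick G f b) (b - del) b Hcf Hc Hcn Gc1 Gb ltac:(lra))
    as [c [Gc [Hcl [Hcr Hcb]]]].
  assert (Hcand : Cand G f a b c).
  { split; auto. split.
    - rewrite Hcl by lra. rewrite Hc1l by lra. auto.
    - rewrite Hcr by lra. auto. }
  assert (Hgood : good f a b (3 * e') c).
  { intros s Hs.
    assert (Hz1 : Rabs (pick G f z s - f z) < e') by (apply Hf2; apply Rabs_lt_iff; lra).
    assert (Hfa' : Rabs (f a - f z) < e') by (apply Hf1; apply Rabs_lt_iff; lra).
    assert (Hfb' : Rabs (f b - f z) < e') by (apply Hf1; apply Rabs_lt_iff; lra).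
    assert (Hz2 : Rabs (pick G f z s - f a) <= 3 * e').
    { apply Rabs_lt_iff in Hz1, Hfa'. apply Rabs_le_iff. lra. }
    destruct (Rle_dec s (b - del)).
    - rewrite Hcl by lra.
      destruct (Rle_dec s (a + del)).
      + apply (between_bound _ _ _ _ _ (Hc1b s)); auto.
        assert (Rabs (pick G f a s - f a) < e') by (apply Hfa; apply Rabs_lt_iff; lra). lra.
      + rewrite Hc1r by lra. auto.
    - apply (between_bound _ _ _ _ _ (Hcb s)).
      + rewrite Hc1r by lra. auto.
      + assert (Hq : Rabs (pick G f b s - f b) < e') by (apply Hfb; apply Rabs_lt_iff; lra).
        apply Rabs_lt_iff in Hq, Hfa', Hfb'. apply Rabs_le_iff. lra. }
  destruct (W_ok G f E a b H Ea Eb Hab) as [_ HW].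
  specialize (HW (3 * e') (ex_intro _ c (conj Hcand Hgood)) t Ht).
  assert (Hfa' : Rabs (f a - f z) < e') by (apply Hf1; apply Rabs_lt_iff; lra).
  apply Rabs_le_iff in HW. apply Rabs_lt_iff in Hfa'. apply Rabs_le_iff.
  unfold e' in *. lra.
Qed.

Lemma cont_nonE G f E z : Hyp G f E -> ~ E z -> continuity_pt (gfun G f E) z.
Proof.
  intros H Hz. pose proof H as (Hcf&Hc&Hcn&[g1 Gg1]&Cf&HE&HU).
  destruct (classic (exists a, LeftEnd E z a)) as [[a Ha]|Hna];
  destruct (classic (exists b, RightEnd E z b)) as [[b Hb]|Hnb].
  - destruct Ha as [Ea [Haz Ha3]]. destruct Hb as [Eb [Hbz Hb3]].
    apply (cont_local _ (W G f a b) z (Rmin (z - a) (b - z))).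
    + apply Rmin_pos; lra.
    + intros y Hy. pose proof (Rmin_l (z - a) (b - z)). pose proof (Rmin_r (z - a) (b - z)).
      apply Rabs_lt_iff in Hy.
      apply gfun_LR.
      * intros Ey. destruct (Rlt_le_dec z y).
        -- specialize (Hb3 y Ey ltac:(lra)). lra.
        -- specialize (Ha3 y Ey ltac:(lra)). lra.
      * split; auto. split; [lra|]. intros e Ee Hae. specialize (Ha3 e Ee Hae).
        destruct (Rlt_le_dec e b); [specialize (Hb3 e Ee r); lra|lra].
      * split; auto. split; [lra|]. intros e Ee Heb. specialize (Hb3 e Ee Heb).
        destruct (Rlt_le_dec a e); [specialize (Ha3 e Ee r); lra|lra].
    + apply (W_cont G f E a b H Ea Eb). lra.
  - pose proof (no_right E z HE Hz Hnb) as Hr.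
    destruct Ha as [Ea [Haz Ha3]].
    apply (cont_local _ (pick G f a) z (z - a)); [lra| |apply pick_cont with E; auto].
    intros y Hy. apply Rabs_lt_iff in Hy.
    assert (Hny : ~ E y).
    { intros Ey. specialize (Hr y Ey). specialize (Ha3 y Ey ltac:(lra)). lra. }
    apply gfun_L; auto.
    + split; auto. split; [lra|]. intros e Ee Hae. specialize (Ha3 e Ee Hae). specialize (Hr e Ee). lra.
    + intros [b [Eb [Hb _]]]. specialize (Hr b Eb). specialize (Ha3 b Eb ltac:(lra)). lra.
  - pose proof (no_left E z HE Hz Hna) as Hl.
    destruct Hb as [Eb [Hbz Hb3]].
    apply (cont_local _ (pick G f b) z (b - z)); [lra| |apply pick_cont with E; auto].
    intros y Hy. apply Rabs_lt_iff in Hy.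
    assert (Hny : ~ E y).
    { intros Ey. specialize (Hl y Ey). specialize (Hb3 y Ey ltac:(lra)). lra. }
    apply gfun_R; auto.
    + intros [a [Ea [Ha _]]]. specialize (Hl a Ea). specialize (Hb3 a Ea ltac:(lra)). lra.
    + split; auto. split; [lra|]. intros e Ee Heb. specialize (Hb3 e Ee Heb). specialize (Hl e Ee). lra.
  - pose proof (no_right E z HE Hz Hnb) as Hr.
    pose proof (no_left E z HE Hz Hna) as Hl.
    assert (HG0 : G (g0 G)) by (unfold g0; apply epsilon_spec; eauto).
    apply (cont_local _ (g0 G) z 1); [lra| |apply Hcf; auto].
    intros y _. apply gfun_N.
    + intros Ey. specialize (Hr y Ey). specialize (Hl y Ey). lra.
    + intros [a [Ea _]]. specialize (Hr a Ea). specialize (Hl a Ea). lra.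
    + intros [a [Ea _]]. specialize (Hr a Ea). specialize (Hl a Ea). lra.
Qed.

Lemma right_ok G f E z : Hyp G f E -> E z -> forall eps, 0 < eps -> exists del, 0 < del /\
  forall y, z < y < z + del -> Rabs (gfun G f E y - f z) < eps.
Proof.
  intros H Ez eps Heps. pose proof H as (Hcf&Hc&Hcn&_&Cf&HE&HU).
  destruct (BL G f E z H Ez (eps / 2) ltac:(lra)) as [h0 [Hh0 HB]].
  destruct (cpt_elim f z (Cf z) eps Heps) as [h1 [Hh1 Hf1]].
  set (h2 := Rmin h0 h1).
  assert (h2 <= h0) by apply Rmin_l. assert (h2 <= h1) by apply Rmin_r.
  assert (0 < h2) by (apply Rmin_pos; lra).
  destruct (classic (exists e, E e /\ z < e /\ e < z + h2)) as [[e [Ee [He1 He2]]]|Hn].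
  - exists (e - z). split; [lra|]. intros y Hy.
    destruct (classic (E y)) as [Ey|Ny].
    + rewrite gfun_E by auto. apply Hf1. apply Rabs_lt_iff; lra.
    + destruct (left_end_ex E y HE Ny ltac:(exists z; split; auto; lra)) as [a Ha].
      destruct (right_end_ex E y HE Ny ltac:(exists e; split; auto; lra)) as [b Hb].
      rewrite (gfun_LR G f E y a b Ny Ha Hb).
      destruct Ha as [Ea [Hay Ha3]]. destruct Hb as [Eb [Hby Hb3]].
      assert (z <= a). { destruct (Rlt_le_dec a z); auto. specialize (Ha3 z Ez r). lra. }
      assert (b <= e). { destruct (Rlt_le_dec e b); auto. specialize (Hb3 e Ee r). lra. }
      specialize (HB a b y Ea Eb ltac:(lra) ltac:(lra) ltac:(lra) ltac:(lra)). lra.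
  - assert (Hn' : forall e, E e -> z < e -> z + h2 <= e).
    { intros e Ee Hze. apply Rnot_lt_le. intros Hl. apply Hn. eauto. }
    set (y0 := z + h2 / 2).
    assert (Ny0 : ~ E y0). { intros Ey0. specialize (Hn' y0 Ey0 ltac:(unfold y0; lra)). unfold y0 in *; lra. }
    destruct (classic (exists b, RightEnd E y0 b)) as [[b Hb]|Hnb].
    + destruct Hb as [Eb [Hb1 Hb3]].
      assert (Hbz : z + h2 <= b) by (apply Hn'; auto; unfold y0 in *; lra).
      destruct (W_ok G f E z b H Ez Eb ltac:(lra)) as [[_ [HWz _]] _].
      destruct (cpt_elim _ z (W_cont G f E z b H Ez Eb ltac:(lra) z) eps Heps) as [d1 [Hd1 HW1]].
      rewrite HWz in HW1.
      exists (Rmin d1 h2). split; [apply Rmin_pos; lra|].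
      intros y Hy. pose proof (Rmin_l d1 h2). pose proof (Rmin_r d1 h2).
      assert (Ny : ~ E y). { intros Ey. specialize (Hn' y Ey ltac:(lra)). lra. }
      rewrite (gfun_LR G f E y z b Ny).
      * apply HW1. apply Rabs_lt_iff; lra.
      * split; auto. split; [lra|]. intros e Ee Hze. specialize (Hn' e Ee Hze). lra.
      * split; auto. split; [lra|]. intros e Ee Heb. specialize (Hb3 e Ee Heb).
        destruct (Rlt_le_dec z e); [specialize (Hn' e Ee r); unfold y0 in *; lra|lra].
    + destruct (cpt_elim _ z (pick_cont G f E z H Ez z) eps Heps) as [d1 [Hd1 HP1]].
      destruct (pickE G f E z H Ez) as [_ Pz]. rewrite Pz in HP1.
      exists (Rmin d1 h2). split; [apply Rmin_pos; lra|].
      intros y Hy. pose proof (Rmin_l d1 h2). pose proof (Rmin_r d1 h2).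
      assert (Ny : ~ E y). { intros Ey. specialize (Hn' y Ey ltac:(lra)). lra. }
      rewrite (gfun_L G f E y z Ny).
      * apply HP1. apply Rabs_lt_iff; lra.
      * split; auto. split; [lra|]. intros e Ee Hze. specialize (Hn' e Ee Hze). lra.
      * intros [b [Eb [Hb1 _]]]. apply Hnb. apply right_end_ex; auto.
        exists b. split; auto. specialize (Hn' b Eb ltac:(lra)). unfold y0; lra.
Qed.

Lemma left_ok G f E z : Hyp G f E -> E z -> forall eps, 0 < eps -> exists del, 0 < del /\
  forall y, z - del < y < z -> Rabs (gfun G f E y - f z) < eps.
Proof.
  intros H Ez eps Heps. pose proof H as (Hcf&Hc&Hcn&_&Cf&HE&HU).
  destruct (BL G f E z H Ez (eps / 2) ltac:(lra)) as [h0 [Hh0 HB]].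
  destruct (cpt_elim f z (Cf z) eps Heps) as [h1 [Hh1 Hf1]].
  set (h2 := Rmin h0 h1).
  assert (h2 <= h0) by apply Rmin_l. assert (h2 <= h1) by apply Rmin_r.
  assert (0 < h2) by (apply Rmin_pos; lra).
  destruct (classic (exists e, E e /\ z - h2 < e /\ e < z)) as [[e [Ee [He1 He2]]]|Hn].
  - exists (z - e). split; [lra|]. intros y Hy.
    destruct (classic (E y)) as [Ey|Ny].
    + rewrite gfun_E by auto. apply Hf1. apply Rabs_lt_iff; lra.
    + destruct (left_end_ex E y HE Ny ltac:(exists e; split; auto; lra)) as [a Ha].
      destruct (right_end_ex E y HE Ny ltac:(exists z; split; auto; lra)) as [b Hb].
      rewrite (gfun_LR G f E y a b Ny Ha Hb).
      destruct Ha as [Ea [Hay Ha3]]. destruct Hb as [Eb [Hby Hb3]].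
      assert (e <= a). { destruct (Rlt_le_dec a e); auto. specialize (Ha3 e Ee r). lra. }
      assert (b <= z). { destruct (Rlt_le_dec z b); auto. specialize (Hb3 z Ez r). lra. }
      specialize (HB a b y Ea Eb ltac:(lra) ltac:(lra) ltac:(lra) ltac:(lra)). lra.
  - assert (Hn' : forall e, E e -> e < z -> e <= z - h2).
    { intros e Ee Hze. apply Rnot_lt_le. intros Hl. apply Hn. eauto. }
    set (y0 := z - h2 / 2).
    assert (Ny0 : ~ E y0). { intros Ey0. specialize (Hn' y0 Ey0 ltac:(unfold y0; lra)). unfold y0 in *; lra. }
    destruct (classic (exists a, LeftEnd E y0 a)) as [[a Ha]|Hna].
    + destruct Ha as [Ea [Ha1 Ha3]].
      assert (Haz : a <= z - h2) by (apply Hn'; auto; unfold y0 in *; lra).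
      destruct (W_ok G f E a z H Ea Ez ltac:(lra)) as [[_ [_ HWz]] _].
      destruct (cpt_elim _ z (W_cont G f E a z H Ea Ez ltac:(lra) z) eps Heps) as [d1 [Hd1 HW1]].
      rewrite HWz in HW1.
      exists (Rmin d1 h2). split; [apply Rmin_pos; lra|].
      intros y Hy. pose proof (Rmin_l d1 h2). pose proof (Rmin_r d1 h2).
      assert (Ny : ~ E y). { intros Ey. specialize (Hn' y Ey ltac:(lra)). lra. }
      rewrite (gfun_LR G f E y a z Ny).
      * apply HW1. apply Rabs_lt_iff; lra.
      * split; auto. split; [lra|]. intros e Ee Hae. specialize (Ha3 e Ee Hae).
        destruct (Rlt_le_dec e z); [specialize (Hn' e Ee r); unfold y0 in *; lra|lra].
      * split; auto. split; [lra|]. intros e Ee Hez. specialize (Hn' e Ee Hez). lra.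
    + destruct (cpt_elim _ z (pick_cont G f E z H Ez z) eps Heps) as [d1 [Hd1 HP1]].
      destruct (pickE G f E z H Ez) as [_ Pz]. rewrite Pz in HP1.
      exists (Rmin d1 h2). split; [apply Rmin_pos; lra|].
      intros y Hy. pose proof (Rmin_l d1 h2). pose proof (Rmin_r d1 h2).
      assert (Ny : ~ E y). { intros Ey. specialize (Hn' y Ey ltac:(lra)). lra. }
      rewrite (gfun_R G f E y z Ny).
      * apply HP1. apply Rabs_lt_iff; lra.
      * intros [a [Ea [Ha1 _]]]. apply Hna. apply left_end_ex; auto.
        exists a. split; auto. specialize (Hn' a Ea ltac:(lra)). unfold y0; lra.
      * split; auto. split; [lra|]. intros e Ee Hez. specialize (Hn' e Ee Hez). lra.
Qed.

Lemma key G f E : Hyp G f E -> exists g, G g /\ forall x, E x -> f x = g x.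
Proof.
  intros H. pose proof H as (Hcf&Hc&Hcn&[g1 Gg1]&Cf&HE&HU).
  exists (gfun G f E). split.
  - apply to_G; auto.
    + intros z. destruct (classic (E z)) as [Ez|Nz].
      * apply cpt_intro. intros eps Heps.
        destruct (right_ok G f E z H Ez eps Heps) as [d1 [Hd1 R1]].
        destruct (left_ok G f E z H Ez eps Heps) as [d2 [Hd2 L2]].
        exists (Rmin d1 d2). split; [apply Rmin_pos; lra|].
        intros y Hy. pose proof (Rmin_l d1 d2). pose proof (Rmin_r d1 d2).
        apply Rabs_lt_iff in Hy. rewrite (gfun_E G f E z Ez).
        destruct (Rtotal_order y z) as [Hl|[->|Hg]].
        -- apply L2; lra.
        -- rewrite gfun_E by auto. rewrite Rminus_diag, Rabs_R0; lra.
        -- apply R1; lra.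
      * apply cont_nonE; auto.
    + intros t. destruct (classic (E t)) as [Et|Nt].
      * rewrite gfun_E by auto. destruct (HU t Et) as [h [Gh Hh]]. exists h; auto.
      * destruct (classic (exists a, LeftEnd E t a)) as [[a Ha]|Hna];
        destruct (classic (exists b, RightEnd E t b)) as [[b Hb]|Hnb].
        -- rewrite (gfun_LR G f E t a b Nt Ha Hb). exists (W G f a b). split; auto.
           destruct Ha as [Ea [? _]]. destruct Hb as [Eb [? _]].
           destruct (W_ok G f E a b H Ea Eb ltac:(lra)) as [[? _] _]; auto.
        -- rewrite (gfun_L G f E t a Nt Ha Hnb). exists (pick G f a). split; auto.
           destruct Ha as [Ea _]. apply (pickE G f E a H Ea).
        -- rewrite (gfun_R G f E t b Nt Hna Hb). exists (pick G f b). split; auto.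
           destruct Hb as [Eb _]. apply (pickE G f E b H Eb).
        -- rewrite (gfun_N G f E t Nt Hna Hnb). exists (g0 G). split; auto.
           unfold g0; apply epsilon_spec; eauto.
  - intros x Ex. rewrite gfun_E; auto.
Qed.

Lemma closed_pair x y : closed_set (fun t => t = x \/ t = y).
Proof.
  intros c Hc. unfold complementary in Hc.
  assert (Hx : c <> x) by tauto. assert (Hy : c <> y) by tauto.
  assert (P1 : 0 < Rabs (c - x)) by (apply Rabs_pos_lt; lra).
  assert (P2 : 0 < Rabs (c - y)) by (apply Rabs_pos_lt; lra).
  exists (mkposreal _ (Rmin_pos _ _ P1 P2)).
  intros t Ht. unfold disc in Ht; simpl in Ht.
  pose proof (Rmin_l (Rabs (c - x)) (Rabs (c - y))). pose proof (Rmin_r (Rabs (c - x)) (Rabs (c - y))).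
  intros [->| ->].
  - rewrite <- Rabs_Ropp in Ht. replace (- (x - c)) with (c - x) in Ht by ring. lra.
  - rewrite <- Rabs_Ropp in Ht. replace (- (y - c)) with (c - y) in Ht by ring. lra.
Qed.

Lemma closed_single x : closed_set (fun t => t = x).
Proof.
  intros c Hc. destruct (closed_pair x x c) as [d Hd].
  { intros [H|H]; apply Hc; auto. }
  exists d. intros t Ht Htx. apply (Hd t Ht). auto.
Qed.

Lemma closed_full : closed_set (fun _ => True).
Proof. intros c Hc. exfalso. apply Hc. exact I. Qed.

Theorem corollary4p6 (G : fam) :
  cont_fam G -> (exists g, G g) ->
  ((forall S : (R -> Prop) -> Prop,
      K_G G S <-> exists X : R -> Prop, seteq S (CL_sub X))
   <->
   (complete G /\ connected G /\
    forall x : R, exists f : R -> R, continuity f /\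
      forall y : R, ~ union_graphs G (y, f y) <-> y = x)).
Proof.
  intros Hcf Hne. split.
  - intros H1.
    assert (K : forall F, cont_fam F -> exists X, seteq (E_G G F) (CL_sub X)).
    { intros F CF. apply H1. exists F. split; auto. intros E; tauto. }
    assert (Hcomp : complete G).
    { intros g Cg Hg.
      destruct (K (fun h => h = g) ltac:(intros h ->; auto)) as [X HX].
      assert (HXall : forall y, X y).
      { intros y. apply (HX (fun t => t = y)); auto.
        split. apply closed_single. intros h ->. split; auto. split. apply closed_single.
        destruct (Hg y) as [g' [Gg' Hg']]. simpl in Hg'. exists g'. split; auto.
        intros t ->; auto. }
      assert (HE : E_G G (fun h => h = g) (fun _ => True)).
      { apply HX. split. apply closed_full. intros; auto. }
      destruct HE as [_ HR]. destruct (HR g eq_refl) as [_ [_ [g' [Gg' Hgg]]]].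
      replace g with g'; auto. apply functional_extensionality; intros t; symmetry; auto. }
    split; [exact Hcomp|split].
    + intros f g Gf Gg x y Hxy.
      set (k := fun t => f x + ((g y - f x) / (y - x)) * (t - x)).
      assert (Ck : continuity k).
      { unfold k. apply continuity_plus. apply continuity_const. intros a b; auto.
        apply continuity_scal. apply continuity_minus. apply derivable_continuous, derivable_id.
        apply continuity_const. intros a b; auto. }
      assert (Hkx : k x = f x) by (unfold k; ring).
      assert (Hky : k y = g y) by (unfold k; field; lra).
      destruct (K (fun h => h = k) ltac:(intros h ->; auto)) as [X HX].
      assert (Hsing : forall z h, G h -> k z = h z -> X z).
      { intros z h Gh Hz. apply (HX (fun t => t = z)); auto.
        split. apply closed_single. intros h' ->. split; auto. split. apply closed_single.
        exists h. split; auto. intros t ->; auto. }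
      assert (Xx : X x) by (apply (Hsing x f); auto).
      assert (Xy : X y) by (apply (Hsing y g); auto).
      assert (HE : E_G G (fun h => h = k) (fun t => t = x \/ t = y)).
      { apply HX. split. apply closed_pair. intros t [->| ->]; auto. }
      destruct HE as [_ HR]. destruct (HR k eq_refl) as [_ [_ [h [Gh Hh]]]].
      exists h. split; auto. split.
      * rewrite <- Hh by auto. auto.
      * rewrite <- Hh by auto. auto.
    + intros x.
      set (S := CL_sub (fun y => y <> x)).
      assert (HS0 : exists X, seteq S (CL_sub X)).
      { exists (fun y => y <> x). intros E. unfold S. tauto. }
      destruct (proj2 (H1 S) HS0) as [F [CF HS]].
      assert (Hnx : ~ E_G G F (fun t => t = x)).
      { intros HE. apply HS in HE. destruct HE as [_ HE]. apply (HE x); auto. }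
      assert (Hex : exists h, F h /\ ~ R_G G h (fun t => t = x)).
      { apply NNPP. intros Hn. apply Hnx. split. apply closed_single.
        intros h Fh. apply NNPP. intros Hr. apply Hn. eauto. }
      destruct Hex as [h [Fh Hr]].
      exists h. split. apply CF; auto.
      intros y. split.
      * intros Hu. apply NNPP. intros Hyx. apply Hu.
        assert (HE : E_G G F (fun t => t = y)).
        { apply HS. split. apply closed_single. intros t ->; auto. }
        destruct HE as [_ HR]. destruct (HR h Fh) as [_ [_ [g' [Gg' Hg']]]].
        exists g'. split; auto. simpl. apply Hg'; auto.
      * intros ->. intros [g' [Gg' Hg']]. simpl in Hg'. apply Hr.
        split. apply CF; auto. split. apply closed_single. exists g'. split; auto.
        intros t ->; auto.
  - intros [Hc [Hcn H3]] S. split.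
    + intros [F [CF Hs]].
      exists (fun y => forall h, F h -> union_graphs G (y, h y)).
      intros E. split.
      * intros HSE. apply Hs in HSE. destruct HSE as [CLE HR]. split; auto.
        intros y Ey h Fh. destruct (HR h Fh) as [_ [_ [g' [Gg' Hag]]]].
        exists g'. split; auto. simpl. auto.
      * intros [CLE HX]. apply Hs. split; auto. intros h Fh.
        split. apply CF; auto. split; auto.
        apply key. refine (conj Hcf (conj Hc (conj Hcn (conj Hne (conj _ (conj CLE _)))))).
        apply CF; auto. intros y Ey. apply HX; auto.
    + intros [X Hs].
      exists (fun h => continuity h /\ exists x, ~ X x /\
                 forall y, ~ union_graphs G (y, h y) <-> y = x).
      split. intros h [Ch _]; auto.
      intros E. split.
      * intros HSE. apply Hs in HSE. destruct HSE as [CLE HX]. split; auto.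
        intros h [Ch [x [Hx Hiff]]]. split; auto. split; auto.
        apply key. refine (conj Hcf (conj Hc (conj Hcn (conj Hne (conj Ch (conj CLE _)))))).
        intros y Ey. apply NNPP. intros Hn. apply Hiff in Hn. subst y. apply Hx, HX; auto.
      * intros [CLE HR]. apply Hs. split; auto. intros y Ey.
        apply NNPP. intros Hy. destruct (H3 y) as [h [Ch Hiff]].
        destruct (HR h (conj Ch (ex_intro _ y (conj Hy Hiff)))) as [_ [_ [g' [Gg' Hg']]]].
        apply (proj2 (Hiff y) eq_refl). exists g'. split; auto. simpl. auto.
Qed.
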